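(* Let $(A,\cdot)$ be a commutative associative algebra and $(P,Q)$ an admissible pair on it. Define $x\star y=x\cdot Q(y)$ for $x,y\in A$. Then $(A,\star)$ is a Novikov algebra.
   Context: All vector spaces are finite-dimensional over a field $\mathbb F$ of characteristic $0$. An admissible pair on a commutative associative algebra $(A,\cdot)$ is a pair of linear maps $P,Q:A\to A$ with $Q(x\cdot y)=Q(x)\cdot y+x\cdot P(y)$ for all $x,y\in A$. A Novikov algebra is $(A,\star)$ with $(x\star y)\star z-x\star(y\star z)=(y\star x)\star z-y\star(x\star z)$ and $(x\star y)\star z=(x\star z)\star y$ for all $x,y,z\in A$. *)

(* Defs.v *)
From HB Require Import structures.
From mathcomp Require Import all_boot all_order all_algebra.
Set Implicit Arguments. Unset Strict Implicit. Unset Printing Implicit Defensive.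
Import GRing.Theory.
Local Open Scope ring_scope.

Definition bilinear_op (F : fieldType) (A : lmodType F) (mul : A -> A -> A) :=
  (forall a x y z, mul (a *: x + y) z = a *: mul x z + mul y z) /\
  (forall a x y z, mul x (a *: y + z) = a *: mul x y + mul x z).

Definition is_com_assoc_algebra (F : fieldType) (A : lmodType F)
    (mul : A -> A -> A) :=
  [/\ bilinear_op mul,
      (forall x y, mul x y = mul y x) &
      (forall x y z, mul (mul x y) z = mul x (mul y z))].

Definition admissible_pair (F : fieldType) (A : lmodType F)
    (mul : A -> A -> A) (P Q : A -> A) :=
  forall x y, Q (mul x y) = mul (Q x) y + mul x (P y).

Definition novikov_identities (F : fieldType) (A : lmodType F)
    (star : A -> A -> A) :=
  (forall x y z, star (star x y) z - star x (star y z)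
                 = star (star y x) z - star y (star x z)) /\
  (forall x y z, star (star x y) z = star (star x z) y).

Definition is_novikov_algebra (F : fieldType) (A : lmodType F)
    (star : A -> A -> A) :=
  bilinear_op star /\ novikov_identities star.

(* Main.v *)
Require Import Defs.
From HB Require Import structures.
From mathcomp Require Import all_boot all_order all_algebra.
Import GRing.Theory.
Local Open Scope ring_scope.

Theorem proposition3p26 (F : fieldType) (A : vectType F)
    (mul : A -> A -> A) (P Q : {linear A -> A}) :
  [pchar F] =i pred0 ->
  is_com_assoc_algebra mul ->
  admissible_pair mul P Q ->
  is_novikov_algebra (fun x y => mul x (Q y)).
Proof.
move=> _ [[Hl Hr] Hc Ha] Hadm.
have mD : forall x y z, mul x (y + z) = mul x y + mul x z.
  by move=> x y z; have := Hr 1 x y z; rewrite !scale1r.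
split; first split.
- by move=> a x y z; rewrite Hl.
- by move=> a x y z; rewrite linearD linearZ /= Hr.
split.
- move=> x y z /=.
  rewrite !Hadm !mD !Ha.
  have -> : mul x (mul y (P (Q z))) = mul y (mul x (P (Q z))).
    by rewrite -Ha (Hc x y) Ha.
  have -> : mul x (mul (Q y) (Q z)) = mul (Q y) (mul x (Q z)).
    by rewrite -Ha (Hc x) Ha.
  have -> : mul y (mul (Q x) (Q z)) = mul (Q x) (mul y (Q z)).
    by rewrite -Ha (Hc y) Ha.
  rewrite -!Ha (Hc (Q y) x) (Hc (Q x) y) !Ha.
  by rewrite !opprD !addrA !subrr !add0r.
- move=> x y z /=.
  by rewrite !Ha (Hc (Q y)).
Qed.
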